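(* Let $k\ge 1$ be an integer and $\beta,\gamma>0$, and put $R_0=\beta/\gamma$. For $\boldsymbol{y}=(y_1,\dots,y_k)\in\mathbb{R}^k$ and $\boldsymbol{\theta}=(\theta_1,\dots,\theta_k)\in\mathbb{R}^k$ define $$H_k(\boldsymbol{y},\boldsymbol{\theta})=\beta\Big(\sum_{m=1}^k y_m\Big)\Big(1-\sum_{m=1}^k y_m\Big)\big(e^{\theta_1}-1\big)+k\gamma\sum_{m=1}^{k-1}y_m\big(e^{-\theta_m+\theta_{m+1}}-1\big)+k\gamma\,y_k\big(e^{-\theta_k}-1\big),$$ and $$S_k(\boldsymbol{\theta})=\ln\Big(\frac{1}{k}\sum_{m=1}^k e^{\theta_m}\Big)-\frac{\gamma}{\beta}\Big(1-\frac{k}{\sum_{m=1}^k e^{\theta_m}}\Big).$$ Let $z^*$ be the unique positive real number with $\sum_{m=1}^k (z^* )^m=k\gamma/\beta$, let $\theta_k^*=\ln z^*$, and let $\boldsymbol{\theta}^*=(k,k-1,\dots,2,1)\,\theta_k^*\in\mathbb{R}^k$. Then: (i) for every $\boldsymbol{\theta}\in\mathbb{R}^k$, $H_k\big(\nabla S_k(\boldsymbol{\theta}),\boldsymbol{\theta}\big)=0$, where $\nabla S_k=(\partial S_k/\partial\theta_1,\dots,\partial S_k/\partial\theta_k)$; (ii) $S_k(\mathbf{0})=0$; (iii) $S_k(\boldsymbol{\theta}^* )=1-\frac{1}{R_0}-\ln R_0$.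
   Context: $H_k$ is the Hamiltonian associated with the SIS infection model with $k$ infectious stages (Erlang-distributed infectious periods), where $y_m$ is the scaled number of individuals in infectious stage $m$ and $\theta_m$ is the conjugate momentum variable. *)

(* Defs.v *)
From Stdlib Require Import Reals Lra.
Open Scope R_scope.

(* sumk k f = f 1 + f 2 + ... + f k  (indices start at 1; sumk 0 f = 0) *)
Fixpoint sumk (k : nat) (f : nat -> R) : R :=
  match k with
  | O => 0
  | S n => sumk n f + f (S n)
  end.

(* Vectors in R^k are functions nat -> R, only indices 1..k are relevant. *)

Definition Hk (k : nat) (beta gamma : R) (y th : nat -> R) : R :=
  beta * sumk k y * (1 - sumk k y) * (exp (th 1%nat) - 1)
  + INR k * gamma * sumk (k - 1) (fun m => y m * (exp (- th m + th (S m)) - 1))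
  + INR k * gamma * y k * (exp (- th k) - 1).

Definition Sk (k : nat) (beta gamma : R) (th : nat -> R) : R :=
  ln (/ INR k * sumk k (fun m => exp (th m)))
  - gamma / beta * (1 - INR k / sumk k (fun m => exp (th m))).

Definition upd (th : nat -> R) (m : nat) (t : R) : nat -> R :=
  fun j => if Nat.eq_dec j m then t else th j.

Definition is_gradient (k : nat) (F : (nat -> R) -> R) (th g : nat -> R) : Prop :=
  forall m : nat, (1 <= m <= k)%nat ->
    derivable_pt_lim (fun t => F (upd th m t)) (th m) (g m).

(* Main.v *)
Require Import Defs.
From Stdlib Require Import Reals.
From Stdlib Require Import Lra Lia FunctionalExtensionality.
From Coquelicot Require Import Coquelicot.
Open Scope R_scope.

Lemma sumk_ext n f g : (forall j, (1 <= j <= n)%nat -> f j = g j) -> sumk n f = sumk n g.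
Proof.
  induction n; simpl; intros H; auto.
  rewrite IHn by (intros; apply H; lia). rewrite H by lia. reflexivity.
Qed.

Lemma sumk_scal n c f : sumk n (fun j => c * f j) = c * sumk n f.
Proof. induction n; simpl; [ring|]. rewrite IHn; ring. Qed.

Lemma sumk_pos n f : (1 <= n)%nat -> (forall j, 0 < f j) -> 0 < sumk n f.
Proof.
  intros Hn Hf. induction n; [lia|]. simpl.
  destruct n. simpl. specialize (Hf 1%nat). lra.
  specialize (IHn ltac:(lia)). specialize (Hf (S (S n))). lra.
Qed.

Lemma sumk_upd_out n (f : R -> R) th m t : (n < m)%nat ->
  sumk n (fun j => f (upd th m t j)) = sumk n (fun j => f (th j)).
Proof.
  intros H; apply sumk_ext; intros j Hj. unfold upd.
  destruct (Nat.eq_dec j m); [lia|auto].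
Qed.

Lemma sumk_upd n (f : R -> R) th m t : (1 <= m <= n)%nat ->
  sumk n (fun j => f (upd th m t j)) = sumk n (fun j => f (th j)) - f (th m) + f t.
Proof.
  induction n; intros H; [lia|]. simpl.
  destruct (Nat.eq_dec m (S n)).
  - subst. rewrite sumk_upd_out by lia. unfold upd at 1.
    destruct (Nat.eq_dec (S n) (S n)); [|congruence]. ring.
  - rewrite IHn by lia. unfold upd at 1.
    destruct (Nat.eq_dec (S n) m); [lia|]. ring.
Qed.

Lemma sumk_tel n f : sumk n (fun m => f (S m) - f m) = f (S n) - f 1%nat.
Proof. induction n; simpl; [ring|]. rewrite IHn; ring. Qed.

Lemma sumk_shift n f : sumk (S n) f = f 1%nat + sumk n (fun m => f (S m)).
Proof.
  induction n. simpl. ring.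
  change (sumk (S (S n)) f) with (sumk (S n) f + f (S (S n))).
  rewrite IHn. simpl. ring.
Qed.

Lemma sumk_rev n f : sumk n (fun m => f (n - m + 1)%nat) = sumk n f.
Proof.
  induction n. reflexivity.
  rewrite sumk_shift. simpl sumk at 2.
  replace (S n - 1 + 1)%nat with (S n) by lia.
  change (sumk n (fun m => f (S n - S m + 1)%nat)) with (sumk n (fun m => f (n - m + 1)%nat)).
  rewrite IHn. ring.
Qed.
Lemma deriv_aux (K C b g x : R) : 0 < K -> 0 < C + exp x -> 0 < b ->
  derivable_pt_lim (fun t => ln (/ K * (C + exp t)) - g / b * (1 - K / (C + exp t))) x
   (exp x * (1 / (C + exp x) - g * K / (b * (C + exp x) ^ 2))).
Proof.
  intros HK HE Hb. apply is_derive_Reals.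
  auto_derive.
  - repeat split; try lra. apply Rmult_lt_0_compat; [apply Rinv_0_lt_compat|]; lra.
  - field. repeat split; lra.
Qed.

Theorem mainTheorem1 (k : nat) (beta gamma : R) :
  (1 <= k)%nat -> 0 < beta -> 0 < gamma ->
  (* (i) *)
  (forall th : nat -> R,
     exists g : nat -> R,
       is_gradient k (Sk k beta gamma) th g /\ Hk k beta gamma g th = 0)
  (* (ii) *)
  /\ Sk k beta gamma (fun _ => 0) = 0
  (* (iii) *)
  /\ (forall zstar : R,
        0 < zstar ->
        sumk k (fun m => zstar ^ m) = INR k * gamma / beta ->
        Sk k beta gamma (fun m => INR (k - m + 1) * ln zstar)
        = 1 - 1 / (beta / gamma) - ln (beta / gamma)).
Proof.
  intros Hk1 Hb Hg.
  assert (HK : 0 < INR k) by (apply lt_0_INR; lia).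
  split; [|split].
  - intros th.
    set (E := sumk k (fun m => exp (th m))).
    assert (HE : 0 < E) by (apply sumk_pos; auto; intros; apply exp_pos).
    set (c := 1 / E - gamma * INR k / (beta * E ^ 2)).
    exists (fun m => exp (th m) * c). split.
    + intros m Hm.
      assert (Hf : (fun t => Sk k beta gamma (upd th m t)) =
        (fun t => ln (/ INR k * ((E - exp (th m)) + exp t))
                  - gamma / beta * (1 - INR k / ((E - exp (th m)) + exp t)))).
      { apply functional_extensionality; intros t. unfold Sk.
        rewrite (sumk_upd k exp th m t Hm). reflexivity. }
      rewrite Hf.
      assert (D := deriv_aux (INR k) (E - exp (th m)) beta gamma (th m) HK
                     ltac:(lra) Hb).
      replace (E - exp (th m) + exp (th m)) with E in D by ring. exact D.
    + unfold Hk.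
      assert (S1 : sumk k (fun m => exp (th m) * c) = c * E).
      { unfold E; rewrite <- sumk_scal. apply sumk_ext; intros; ring. }
      assert (S2 : sumk (k - 1) (fun m => exp (th m) * c * (exp (- th m + th (S m)) - 1))
                   = c * (exp (th k) - exp (th 1%nat))).
      { pose proof (sumk_tel (k - 1) (fun m => exp (th m))) as T. simpl in T.
        replace (S (k - 1)) with k in T by lia. rewrite <- T.
        rewrite <- sumk_scal. apply sumk_ext; intros j _.
        rewrite exp_plus, exp_Ropp. field. apply Rgt_not_eq, exp_pos. }
      rewrite S1, S2, exp_Ropp. unfold c.
      assert (exp (th k) > 0) by apply exp_pos.
      field. lra.
  - unfold Sk.
    assert (H0 : forall n, sumk n (fun _ : nat => exp 0) = INR n).
    { induction n; simpl sumk; [reflexivity|]. rewrite IHn, exp_0, S_INR. ring. }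
    rewrite H0. rewrite Rinv_l by lra. rewrite ln_1.
    unfold Rdiv. rewrite Rinv_r by lra. ring.
  - intros z Hz Hsum. unfold Sk.
    assert (Hs : sumk k (fun m => exp (INR (k - m + 1) * ln z)) = INR k * gamma / beta).
    { rewrite <- Hsum, <- (sumk_rev k (fun m => z ^ m)).
      apply sumk_ext; intros j _. rewrite <- Rpower_pow by exact Hz. reflexivity. }
    rewrite Hs.
    replace (/ INR k * (INR k * gamma / beta)) with (/ (beta / gamma)) by (field; lra).
    rewrite ln_Rinv by (apply Rdiv_lt_0_compat; lra).
    field. lra.
Qed.
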